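(* Let $k$ be a field of characteristic $\neq 2$ and let $\Psi:\mathfrak g_\boxtimes\to\mathfrak g=\mathfrak{sl}_2(k)\otimes_k\mathcal A$ be the Lie algebra homomorphism described in the context. Then $\Psi$ is surjective.
   Context: $\mathcal A=k[t,t^{-1},(1-t)^{-1}]\subset k(t)$, $t'=1-t^{-1}$, $t''=(1-t)^{-1}$. The Tetrahedron algebra $\mathfrak g_\boxtimes$ is the Lie algebra over $k$ with generators $X_{ij}$ ($i,j\in\{0,1,2,3\}$, $i\neq j$) and relations $X_{ij}+X_{ji}=0$ for $i\neq j$; $[X_{ij},X_{jk}]=2(X_{ij}+X_{jk})$ for mutually distinct $i,j,k$; $[X_{hi},[X_{hi},[X_{hi},X_{jk}]]]=4[X_{hi},X_{jk}]$ for mutually distinct $h,i,j,k$. With $x=\begin{pmatrix}-1&2\\0&1\end{pmatrix}$, $y=\begin{pmatrix}-1&0\\-2&1\end{pmatrix}$, $z=\begin{pmatrix}1&0\\0&-1\end{pmatrix}$, $\Psi$ is the Lie algebra homomorphism determined by $\Psi(X_{12})=x\otimes1$, $\Psi(X_{23})=y\otimes 1$, $\Psi(X_{31})=z\otimes 1$, $\Psi(X_{03})=y\otimes t+z\otimes(t-1)$, $\Psi(X_{01})=z\otimes t'+x\otimes(t'-1)$, $\Psi(X_{02})=x\otimes t''+y\otimes(t''-1)$. *)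

(* Defs.v *)
From HB Require Import structures.
From mathcomp Require Import all_boot all_order all_algebra.
Set Implicit Arguments. Unset Strict Implicit. Unset Printing Implicit Defensive.
Import GRing.Theory.
Local Open Scope ring_scope.

(* k(t), realized as the fraction field of k[t]. *)
Definition ratk (k : fieldType) := {fraction {poly k}}.
Definition tK (k : fieldType) : ratk k := tofrac 'X.
Definition cK (k : fieldType) (a : k) : ratk k := tofrac (a%:P).

(* The ring A = k[t, t^-1, (1-t)^-1] inside k(t). *)
Definition in_A (k : fieldType) (f : ratk k) : Prop :=
  exists (p : {poly k}) (a b : nat),
    f = tofrac p / ((tK k) ^+ a * (1 - tK k) ^+ b).

(* sl_2(k) (x)_k A, identified with the traceless 2x2 matrices with entries
   in A, with Lie bracket the commutator. *)
Definition in_sl2A (k : fieldType) (M : 'M[ratk k]_2) : Prop :=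
  \tr M = 0 /\ forall i j, in_A (M i j).

Definition mx2 (R : Type) (a b c d : R) : 'M[R]_2 :=
  \matrix_(i < 2, j < 2)
    if (i == 0 :> nat) then (if (j == 0 :> nat) then a else b)
    else (if (j == 0 :> nat) then c else d).

Definition mat_x (k : fieldType) : 'M[ratk k]_2 := mx2 (-1) 2%:R 0 1.
Definition mat_y (k : fieldType) : 'M[ratk k]_2 := mx2 (-1) 0 (- 2%:R) 1.
Definition mat_z (k : fieldType) : 'M[ratk k]_2 := mx2 1 0 0 (-1).

Definition t1 (k : fieldType) : ratk k := 1 - (tK k)^-1.
Definition t2 (k : fieldType) : ratk k := (1 - tK k)^-1.

Definition i0 : 'I_4 := @inord 3 0.
Definition i1 : 'I_4 := @inord 3 1.
Definition i2 : 'I_4 := @inord 3 2.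
Definition i3 : 'I_4 := @inord 3 3.

Definition is_lie (k : fieldType) (L : lmodType k) (br : L -> L -> L) : Prop :=
  [/\ forall (a : k) x y z, br (a *: x + y) z = a *: br x z + br y z,
      forall (a : k) x y z, br z (a *: x + y) = a *: br z x + br z y,
      forall x, br x x = 0
    & forall x y z, br x (br y z) + br y (br z x) + br z (br x y) = 0].

(* The family X satisfies the defining relations of the Tetrahedron algebra. *)
Definition tet_relations (k : fieldType) (L : lmodType k) (br : L -> L -> L)
    (X : 'I_4 -> 'I_4 -> L) : Prop :=
  [/\ forall i j, i != j -> X i j + X j i = 0,
      forall i j l, i != j -> j != l -> i != l ->
        br (X i j) (X j l) = 2%:R *: (X i j + X j l)
    & forall h i j l, [&& h != i, h != j, h != l, i != j, i != l & j != l] ->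
        br (X h i) (br (X h i) (br (X h i) (X j l)))
          = 4%:R *: br (X h i) (X j l)].

Definition lie_generated (k : fieldType) (L : lmodType k) (br : L -> L -> L)
    (X : 'I_4 -> 'I_4 -> L) : Prop :=
  forall S : L -> Prop,
    (forall i j, i != j -> S (X i j)) ->
    S 0 ->
    (forall x y, S x -> S y -> S (x + y)) ->
    (forall (a : k) x, S x -> S (a *: x)) ->
    (forall x y, S x -> S y -> S (br x y)) ->
    forall x, S x.

Definition lie_hom_to_sl2A (k : fieldType) (L : lmodType k) (br : L -> L -> L)
    (Psi : L -> 'M[ratk k]_2) : Prop :=
  (forall (a : k) x y, Psi (a *: x + y) = cK a *: Psi x + Psi y) /\
  (forall x y, Psi (br x y) = Psi x * Psi y - Psi y * Psi x).

Definition psi_values (k : fieldType) (L : lmodType k)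
    (X : 'I_4 -> 'I_4 -> L) (Psi : L -> 'M[ratk k]_2) : Prop :=
  [/\ Psi (X i1 i2) = mat_x k,
      Psi (X i2 i3) = mat_y k
    & Psi (X i3 i1) = mat_z k] /\
  [/\ Psi (X i0 i3) = tK k *: mat_y k + (tK k - 1) *: mat_z k,
      Psi (X i0 i1) = t1 k *: mat_z k + (t1 k - 1) *: mat_x k
    & Psi (X i0 i2) = t2 k *: mat_x k + (t2 k - 1) *: mat_y k].

(* Main.v *)
Require Import Defs.
From HB Require Import structures.
From mathcomp Require Import all_boot all_order all_algebra.
From mathcomp Require Import ring.
Set Implicit Arguments. Unset Strict Implicit.
Import GRing.Theory.
Local Open Scope ring_scope.

Section Aux.
Variable k : fieldType.
Notation F := (ratk k).

Lemma mx2E (a b c d : F) i j : mx2 a b c d i j =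
  if (i == 0 :> nat) then (if (j == 0 :> nat) then a else b)
  else (if (j == 0 :> nat) then c else d).
Proof. by rewrite mxE. Qed.

Lemma mx2_mul (a b c d a' b' c' d' : F) :
  mx2 a b c d * mx2 a' b' c' d' =
  mx2 (a*a' + b*c') (a*b' + b*d') (c*a' + d*c') (c*b' + d*d').
Proof.
apply/matrixP => i j; rewrite !mxE !big_ord_recl big_ord0 !mxE /= !addr0.
by case: i => [[|[|i]] Hi] //; case: j => [[|[|j]] Hj].
Qed.

Lemma mx2_add (a b c d a' b' c' d' : F) :
  mx2 a b c d + mx2 a' b' c' d' = mx2 (a+a') (b+b') (c+c') (d+d').
Proof.
apply/matrixP => i j; rewrite !mxE.
by case: i => [[|[|i]] Hi] //; case: j => [[|[|j]] Hj].
Qed.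

Lemma mx2_opp (a b c d : F) : - mx2 a b c d = mx2 (-a) (-b) (-c) (-d).
Proof.
apply/matrixP => i j; rewrite !mxE.
by case: i => [[|[|i]] Hi] //; case: j => [[|[|j]] Hj].
Qed.

Lemma mx2_scale (s a b c d : F) : s *: mx2 a b c d = mx2 (s*a) (s*b) (s*c) (s*d).
Proof.
apply/matrixP => i j; rewrite !mxE.
by case: i => [[|[|i]] Hi] //; case: j => [[|[|j]] Hj].
Qed.

Lemma mx2_comm (a b c d a' b' c' d' : F) :
  mx2 a b c d * mx2 a' b' c' d' - mx2 a' b' c' d' * mx2 a b c d =
  mx2 (b*c' - c*b') (a*b' + b*d' - a'*b - b'*d)
      (c*a' + d*c' - c'*a - d'*c) (c*b' - b*c').
Proof.
rewrite !mx2_mul mx2_opp mx2_add; congr mx2; ring.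
Qed.

Lemma mx2_eta (M : 'M[F]_2) : M = mx2 (M 0 0) (M 0 1) (M 1 0) (M 1 1).
Proof.
apply/matrixP => i j; rewrite !mxE.
by case: i => [[|[|i]] Hi] //; case: j => [[|[|j]] Hj] //=; congr (M _ _); apply/val_inj.
Qed.

Lemma cK_mul (a b : k) : cK (a * b) = cK a * cK b.
Proof. by rewrite /cK polyCM rmorphM. Qed.
Lemma cK_add (a b : k) : cK (a + b) = cK a + cK b.
Proof. by rewrite /cK polyCD rmorphD. Qed.
Lemma cK1 : cK (1 : k) = 1.
Proof. by rewrite /cK rmorph1. Qed.
Lemma cK_nat n : cK (n%:R : k) = n%:R.
Proof. by rewrite /cK rmorph_nat rmorph_nat. Qed.
Lemma cK_opp (a : k) : cK (- a) = - cK a.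
Proof. by rewrite /cK polyCN rmorphN. Qed.

Definition closedS (S : 'M[F]_2 -> Prop) :=
  [/\ forall M N, S M -> S N -> S (M + N),
      forall (c : k) M, S M -> S (cK c *: M)
    & forall M N, S M -> S N -> S (M * N - N * M)].

Definition Em (a : F) := mx2 0 a 0 0.
Definition Fm (a : F) := mx2 0 0 a 0.
Definition Hm (a : F) := mx2 a 0 0 (-a).
Definition PS (S : 'M[F]_2 -> Prop) a := [/\ S (Em a), S (Fm a) & S (Hm a)].

Ltac mxeq := rewrite /Em /Fm /Hm ?mx2_comm ?mx2_scale ?mx2_opp ?mx2_add ?mx2_scale ?mx2_opp ?mx2_add; congr mx2; ring.

Lemma S_half S (hk : (2%:R : k) != 0) : closedS S -> forall M, S (2%:R *: M) -> S M.
Proof.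
case=> _ hZ _ M hM; have := hZ (2%:R^-1) _ hM.
by rewrite scalerA -(cK_nat 2) -cK_mul mulVf // cK1 scale1r.
Qed.

Lemma S_opp S : closedS S -> forall M, S M -> S (- M).
Proof. case=> _ hZ _ M hM; have := hZ (-1) _ hM; by rewrite cK_opp cK1 scaleN1r. Qed.

Lemma P_of_E S (hk : (2%:R : k) != 0) (hS : closedS S) : PS S 1 -> forall a, S (Em a) -> PS S a.
Proof.
move=> [h1 h2 h3] a hE; have hC := hS; case: hC => hD hZ hB.
have hH : S (Hm a).
  have -> : Hm a = Em a * Fm 1 - Fm 1 * Em a by mxeq.
  by apply: hB.
split=> //; apply: (@S_half S hk hS).
have -> : 2%:R *: Fm a = Fm 1 * Hm a - Hm a * Fm 1 by mxeq.
by apply: hB.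
Qed.

Lemma P_of_H S (hk : (2%:R : k) != 0) (hS : closedS S) : PS S 1 -> forall a, S (Hm a) -> PS S a.
Proof.
move=> h1 a hH; apply: P_of_E => //; have hC := hS; case: hC => hD hZ hB.
case: h1 => h1 h2 h3.
apply: (@S_half S hk hS).
have -> : 2%:R *: Em a = Hm a * Em 1 - Em 1 * Hm a by mxeq.
by apply: hB.
Qed.

Lemma P_of_F S (hk : (2%:R : k) != 0) (hS : closedS S) : PS S 1 -> forall a, S (Fm a) -> PS S a.
Proof.
move=> h1 a hF; apply: P_of_H => //; have hC := hS; case: hC => hD hZ hB.
case: h1 => h1 h2 h3.
have -> : Hm a = Em 1 * Fm a - Fm a * Em 1 by mxeq.
by apply: hB.
Qed.

Lemma P_mul S (hk : (2%:R : k) != 0) (hS : closedS S) : PS S 1 -> forall a b, PS S a -> PS S b -> PS S (a * b).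
Proof.
move=> h1 a b [ha _ _] [_ hb _]; apply: P_of_H => //; have hC := hS; case: hC => hD hZ hB.
have -> : Hm (a * b) = Em a * Fm b - Fm b * Em a by mxeq.
by apply: hB.
Qed.

Lemma P_add S (hS : closedS S) : forall a b, PS S a -> PS S b -> PS S (a + b).
Proof.
move=> a b [ha1 ha2 ha3] [hb1 hb2 hb3]; have hC := hS; case: hC => hD hZ hB.
split.
- have -> : Em (a + b) = Em a + Em b by mxeq.
  by apply: hD.
- have -> : Fm (a + b) = Fm a + Fm b by mxeq.
  by apply: hD.
- have -> : Hm (a + b) = Hm a + Hm b by mxeq.
  by apply: hD.
Qed.

Lemma P_scale S (hS : closedS S) : forall (c : k) a, PS S a -> PS S (cK c * a).
Proof.
move=> c a [ha1 ha2 ha3]; have hC := hS; case: hC => hD hZ hB.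
split.
- have -> : Em (cK c * a) = cK c *: Em a by mxeq.
  by apply: hZ.
- have -> : Fm (cK c * a) = cK c *: Fm a by mxeq.
  by apply: hZ.
- have -> : Hm (cK c * a) = cK c *: Hm a by mxeq.
  by apply: hZ.
Qed.

Lemma P_pow S (hk : (2%:R : k) != 0) (hS : closedS S) : PS S 1 -> forall a n, PS S a -> PS S (a ^+ n).
Proof.
move=> h1 a n ha; elim: n => [|n IH]; first by rewrite expr0.
by rewrite exprS; apply: P_mul.
Qed.

End Aux.

Ltac mxeq2 := rewrite /Em /Fm /Hm; rewrite !(mx2_mul, mx2_scale, mx2_opp, mx2_add); congr mx2; ring.

Ltac mxeq := rewrite /Em /Fm /Hm ?mx2_comm ?mx2_scale ?mx2_opp ?mx2_add ?mx2_scale ?mx2_opp ?mx2_add; congr mx2; ring.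

Theorem corollary1p3 (k : fieldType) (hk : (2%:R : k) != 0)
    (L : lmodType k) (br : L -> L -> L) (X : 'I_4 -> 'I_4 -> L)
    (Psi : L -> 'M[ratk k]_2) :
  is_lie br -> tet_relations br X -> lie_generated br X ->
  lie_hom_to_sl2A br Psi -> psi_values X Psi ->
  forall M : 'M[ratk k]_2, in_sl2A M -> exists l : L, Psi l = M.
Proof.
move=> _ _ _ [hlin hbr] [[hx hy hz] [h03 h01 h02]] M [htr hA].
pose S := fun N : 'M[ratk k]_2 => exists l : L, Psi l = N.
have hP0 : Psi 0 = 0.
  have h := hlin 1 0 0; rewrite scale1r addr0 cK1 scale1r in h.
  have := congr1 (fun v => v - Psi 0) h; rewrite subrr addrK => <-; done.
have hS : closedS S.
  split.
  - move=> M1 N1 [l1 <-] [l2 <-]; exists (l1 + l2).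
    by have := hlin 1 l1 l2; rewrite scale1r cK1 scale1r.
  - move=> c M1 [l1 <-]; exists (c *: l1).
    by have := hlin c l1 0; rewrite addr0 hP0 addr0.
  - move=> M1 N1 [l1 <-] [l2 <-]; exists (br l1 l2); exact: hbr.
have hC := hS; case: hC => hD hZ hB.
have Sx : S (mat_x k) by exists (X i1 i2).
have Sy : S (mat_y k) by exists (X i2 i3).
have Sz : S (mat_z k) by exists (X i3 i1).
have hN := S_opp hS.
have hH := @S_half _ S hk hS.
have h1 : PS S 1.
  split.
  - apply: (hH); have -> : 2%:R *: Em 1 = mat_x k + mat_z k
      by rewrite /mat_x /mat_z; mxeq.
    by apply: (hD).
  - apply: (hH); have -> : 2%:R *: Fm 1 = - (mat_y k + mat_z k)
      by rewrite /mat_y /mat_z; mxeq.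
    by apply: (hN); apply: (hD).
  - by have -> : Hm 1 = mat_z k by rewrite /mat_z; mxeq.
have Pt : PS S (tK k).
  apply: P_of_F => //; apply: (hH).
  have -> : 2%:R *: Fm (tK k) =
     - ((tK k *: mat_y k + (tK k - 1) *: mat_z k) + mat_z k)
     by rewrite /mat_y /mat_z; mxeq.
  apply: (hN); apply: (hD) => //; rewrite -h03; by exists (X i0 i3).
have Pti : PS S ((tK k)^-1).
  have -> : (tK k)^-1 = cK (-1 : k) * (- (tK k)^-1) by rewrite cK_opp cK1; ring.
  apply: P_scale => //.
  apply: P_of_E => //; apply: (hH).
  have -> : 2%:R *: Em (- (tK k)^-1) =
     (t1 k *: mat_z k + (t1 k - 1) *: mat_x k) + - mat_z k
     by rewrite /mat_x /mat_z /t1; mxeq.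
  apply: (hD); last by apply: (hN).
  rewrite -h01; by exists (X i0 i1).
have Ps : PS S (t2 k).
  apply: P_of_E => //; apply: (hH); apply: (hH).
  pose W := (t2 k *: mat_x k + (t2 k - 1) *: mat_y k) + - Hm 1 + - (2%:R *: Fm 1).
  have hW : S W.
    case: h1 => _ hF1 hH1.
    apply: (hD); last by apply: (hN); by have := hZ 2%:R _ hF1; rewrite cK_nat.
    apply: (hD); last by apply: (hN).
    rewrite -h02; by exists (X i0 i2).
  have -> : 2%:R *: (2%:R *: Em (t2 k)) = Em 1 * (Em 1 * W - W * Em 1) - (Em 1 * W - W * Em 1) * Em 1
    by rewrite /W /mat_x /mat_y; mxeq2.
  case: h1 => hE1 _ _.
  by apply: (hB) => //; apply: (hB).
have Ppoly : forall p : {poly k}, PS S (tofrac p).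
  elim/poly_ind => [|p c IH].
    rewrite rmorph0; have -> : (0 : ratk k) = cK (0 : k) * 1 by rewrite /cK polyC0 rmorph0 mul0r.
    exact: P_scale.
  rewrite rmorphD rmorphM /=.
  apply: P_add => //; first exact: P_mul.
  have -> : tofrac c%:P = cK c * 1 by rewrite mulr1.
  exact: P_scale.
have PA : forall f, in_A f -> PS S f.
  move=> f [p [a [b ->]]].
  apply: P_mul => //; rewrite invfM -!exprVn.
  by apply: P_mul => //; apply: P_pow.
have Hd : M 1 1 = - M 0 0.
  move: htr; rewrite /mxtrace !big_ord_recl big_ord0 addr0.
  have -> : lift ord0 (ord0 : 'I_1) = 1 :> 'I_2 by apply/val_inj.
  by move/eqP; rewrite addr_eq0 => /eqP ->; rewrite opprK.
rewrite (mx2_eta M) Hd.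
have -> : mx2 (M 0 0) (M 0 1) (M 1 0) (- M 0 0) = (Hm (M 0 0) + Em (M 0 1)) + Fm (M 1 0) by mxeq.
have [_ _ ?] := PA _ (hA 0 0).
have [? _ _] := PA _ (hA 0 1).
have [_ ? _] := PA _ (hA 1 0).
by apply: (hD) => //; apply: (hD).
Qed.
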